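(* Let $n\ge 2$, $A\in\mathbb{R}^{n\times n}$ and $C\in\mathbb{R}^{1\times n}$, with $(A,C)$ an observable pair and all eigenvalues of $A$ nonzero. Suppose the eigenvalues $\lambda_1,\ldots,\lambda_n$ of $A$ are pairwise distinct and satisfy $\lambda_1^n=\lambda_2^n=\cdots=\lambda_n^n$. Then, for a finite set $S$ of nonnegative integers, the matrix with rows $CA^{s}$, $s\in S$, has rank $n$ if and only if $S$ contains a subset of the form $$\{t,\ t+r_1n+1,\ t+r_2n+2,\ \ldots,\ t+r_{n-1}n+n-1\}$$ for some $t,r_1,\ldots,r_{n-1}\in\{0,1,2,\ldots\}$.
   Context: Setting: discrete-time single-output system $x(t+1)=Ax(t)+Bu(t)$, $y(t)=Cx(t)+Du(t)$ whose output is measured at the time instances in $S$ (a sampling scheme); the matrix with rows $CA^{s}$, $s\in S$, is the sample-based observability matrix, and rank $n$ means sample-based observability. $(A,C)$ observable means the matrix with rows $C,CA,\ldots,CA^{n-1}$ has rank $n$. *)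

(* Defs.v *)
From mathcomp Require Import all_boot all_order all_algebra.
From mathcomp Require Import complex.
Set Implicit Arguments. Unset Strict Implicit. Unset Printing Implicit Defensive.
Import Order.TTheory GRing.Theory Num.Theory.
Local Open Scope ring_scope.

(* Real matrices are taken over an arbitrary real closed field R (e.g. the
   reals); their eigenvalues live in the algebraic closure R[i] = complex R. *)

Definition cmx (R : rcfType) (m n : nat) (A : 'M[R]_(m, n)) : 'M[R[i]]_(m, n) :=
  map_mx (real_complex R) A.

Definition obs_mx (R : rcfType) (n : nat) (A : 'M[R]_n) (C : 'rV[R]_n)
  : 'M[R]_(n, n) :=
  \matrix_(i < n, j < n) (C *m A ^+ i) 0 j.

Definition observable (R : rcfType) (n : nat) (A : 'M[R]_n) (C : 'rV[R]_n) :=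
  \rank (obs_mx A C) = n.

Definition sample_obs_mx (R : rcfType) (n : nat) (A : 'M[R]_n) (C : 'rV[R]_n)
  (S : seq nat) : 'M[R]_(size S, n) :=
  \matrix_(i < size S, j < n) (C *m A ^+ (nth 0%N S i)) 0 j.

(* Main.v *)
Require Import Defs.
From mathcomp Require Import all_boot all_order all_algebra.
From mathcomp Require Import complex.
From mathcomp Require Import zify.
Import Order.TTheory GRing.Theory Num.Theory.
Local Open Scope ring_scope.

Lemma comb_equiv (N : nat) (S : seq nat) : (0 < N)%N ->
  (forall j : 'I_N, has (fun s => s %% N == j)%N S) <->
  exists (t : nat) (r : nat -> nat),
      t \in S /\ forall k : nat, (1 <= k <= N.-1)%N -> (t + r k * N + k)%N \in S.
Proof.
move=> N0; split.
- move=> H.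
  have exS : exists m, m \in S.
    have := H (Ordinal N0); case/hasP => x xS _; by exists x.
  case: (ex_minnP exS) => t tS tmin.
  pose a k := (fun s => s %% N == (t + k) %% N)%N.
  pose r k := ((nth 0%N S (find (a k) S) - t) %/ N)%N.
  exists t, r; split => // k /andP [k1 kN].
  have hk : has (a k) S by exact: (H (Ordinal (ltn_pmod (t + k) N0))).
  have sS : nth 0%N S (find (a k) S) \in S by rewrite mem_nth // -has_find.
  have sa := nth_find 0%N hk.
  move: sS sa; rewrite /r /a.
  set s := nth 0%N S _ => sS /eqP sa.
  have ts := tmin _ sS.
  have ds : ((s - t) %% N = k)%N.
    have kN' : (k < N)%N by rewrite -(prednK N0) ltnS.
    rewrite -(modn_small kN'); apply/eqP.
    by rewrite -(eqn_modDl t) subnKC // sa.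
  have := divn_eq (s - t) N; rewrite ds => e.
  by rewrite -addnA -e subnKC.
- case=> t [r [tS H]] j.
  case: (eqVneq (t %% N)%N j) => [e|ne].
    by apply/hasP; exists t => //; rewrite e.
  pose k := ((j + (N - t %% N)) %% N)%N.
  have tk : ((t + k) %% N)%N = j.
    rewrite /k modnDmr {1}(divn_eq t N) -addnA modnMDl.
    have := ltn_pmod t N0; have := ltn_ord j.
    move: (t %% N)%N => m jN mN.
    have -> : (m + (j + (N - m)) = j + N)%N by lia.
    by rewrite modnDr modn_small.
  have k0 : k != 0%N by apply: contra_neq ne => k0; rewrite -tk k0 addn0.
  have kN : (k <= N.-1)%N by rewrite -ltnS prednK // ltn_pmod.
  have := H k; rewrite lt0n k0 kN => /(_ isT) xS.
  apply/hasP; exists (t + r k * N + k)%N => //.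
  by rewrite addnAC addnC modnMDl tk.
Qed.

Lemma rank_key (F : fieldType) (n : nat) (v : nat -> 'rV[F]_n.+1)
  (c : F) (S : seq nat) :
  c != 0 -> (forall s, v s = c ^+ (s %/ n.+1) *: v (s %% n.+1)%N) ->
  \rank (\matrix_(i < n.+1, j < n.+1) v i 0 j) = n.+1 ->
  \rank (\matrix_(i < size S, j < n.+1) v (nth 0%N S i) 0 j) = n.+1 <->
  (forall j : 'I_n.+1, has (fun s => s %% n.+1 == j)%N S).
Proof.
move=> c0 vmod rkO.
set N := n.+1.
have N0 : (0 < N)%N by [].
set Om := \matrix_(i < N, j < N) v i 0 j.
set Ms := \matrix_(i < size S, j < N) v (nth 0%N S i) 0 j.
split.
- move=> rkM j; apply/negPn/negP => hj.
  pose P := \matrix_(i < size S, k < N)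
     (if (k : nat) == (nth 0%N S i %% N)%N then c ^+ (nth 0%N S i %/ N) else 0).
  have MP : Ms = P *m Om.
    apply/matrixP => i k; rewrite /Ms /Om !mxE.
    have hx : (nth 0%N S i %% N < N)%N by exact: ltn_pmod.
    rewrite (bigD1 (Ordinal hx)) //= big1 ?addr0.
      by rewrite !mxE eqxx vmod mxE.
    move=> l ne; rewrite !mxE.
    suff -> : ((l : nat) == (nth 0%N S i %% N)%N) = false by rewrite mul0r.
    by apply/negbTE.
  have : row_full P.
    by rewrite /row_full eqn_leq rank_leq_col /= -{1}rkM MP mxrankM_maxl.
  case/row_fullP => Q QP.
  have := congr1 (fun M : 'M[F]_N => M j j) QP; rewrite !mxE eqxx /= big1 => [|i _].
    by move/eqP; rewrite eq_sym oner_eq0.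
  rewrite !mxE.
  case: eqP => [e|_]; last by rewrite mulr0.
  case/negP: hj; apply/hasP; exists (nth 0%N S i); first exact: mem_nth.
  by rewrite -e.
- move=> H.
  pose idx (j : 'I_N) := find (fun s => s %% N == j)%N S.
  have idxlt j : (idx j < size S)%N by rewrite -has_find.
  pose Q := \matrix_(j < N, i < size S)
     (if (i : nat) == idx j then (c ^+ (nth 0%N S i %/ N))^-1 else 0).
  have QM : Q *m Ms = Om.
    apply/matrixP => j k; rewrite /Ms /Om !mxE.
    rewrite (bigD1 (Ordinal (idxlt j))) //= big1 ?addr0.
      rewrite !mxE eqxx vmod mxE mulrA mulVf ?mul1r ?expf_neq0 //.
      by have /eqP -> := nth_find 0%N (H j).
    move=> l ne; rewrite !mxE.
    suff -> : ((l : nat) == idx j) = false by rewrite mul0r.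
    by apply/negbTE.
  apply/eqP; rewrite eqn_leq rank_leq_col /=; apply: leq_trans (mxrankM_maxr Q Ms); by rewrite QM rkO.
Qed.

Theorem lemma4 (R : rcfType) (n : nat) (A : 'M[R]_n) (C : 'rV[R]_n)
  (lambda : 'I_n -> R[i]) :
  (2 <= n)%N ->
  observable A C ->
  (forall a : R[i], eigenvalue (cmx A) a -> a != 0) ->
  (forall k, eigenvalue (cmx A) (lambda k)) ->
  injective lambda ->
  (forall k l, lambda k ^+ n = lambda l ^+ n) ->
  forall S : seq nat,
    \rank (sample_obs_mx A C S) = n <->
    exists (t : nat) (r : nat -> nat),
      t \in S /\ forall k : nat, (1 <= k <= n.-1)%N -> (t + r k * n + k)%N \in S.
Proof.
case: n A C lambda => [|n] A C lambda //= n2 obs nz eig inj lamn S.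
pose f : {rmorphism R -> R[i]} := real_complex R.
set B := cmx A; set D := cmx C.
have expE k : cmx (A ^+ k) = B ^+ k.
  elim: k => [|k IH]; first by rewrite !expr0 /cmx map_mx1.
  by rewrite !exprS -!mulmxE /cmx map_mxM; congr (_ *m _); exact: IH.
have vE s : cmx (C *m A ^+ s) = D *m B ^+ s.
  by rewrite /cmx map_mxM; congr (_ *m _); exact: expE.
pose c := lambda ord0 ^+ n.+1.
have c0 : c != 0 by rewrite expf_neq0 // nz.
have Bn : B ^+ n.+1 = c%:M.
  have cp : char_poly B = 'X ^+ n.+1 - c%:P.
    apply/eqP; rewrite -subr_eq0; apply/negPn/negP => p0.
    set p := _ - _ in p0.
    have sp : (size p <= n.+1)%N.
      apply/leq_sizeP => j hj; rewrite /p !coefB coefXn coefC.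
      case: (ltngtP j n.+1) hj => // [ltj|ej] _.
        rewrite nth_default ?size_char_poly //.
        by rewrite (_ : (j == 0)%N = false) ?subrr ?subr0 //; case: j ltj.
      rewrite ej /=.
      have := char_poly_monic B; move/monicP; rewrite lead_coefE size_char_poly /= => ->.
      by rewrite subr0 subrr.
    have := max_poly_roots p0 (rs := map lambda (enum 'I_n.+1)).
    rewrite size_map size_enum_ord map_inj_uniq // enum_uniq.
    have -> : all (root p) (map lambda (enum 'I_n.+1)).
      apply/allP => x /mapP [k _ ->]; rewrite /root /p !hornerE.
      have := eig k; rewrite eigenvalue_root_char => /rootP ->.
      by rewrite /c (lamn k ord0) subrr subr0.
    by move=> /(_ isT isT); rewrite ltnNge sp.
  have := Cayley_Hamilton B; rewrite cp rmorphB /= rmorphXn /= (horner_mx_X B) horner_mx_C.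
  by move/eqP; rewrite subr_eq0 => /eqP.
have vmod s : D *m B ^+ s = c ^+ (s %/ n.+1) *: (D *m B ^+ (s %% n.+1)%N).
  rewrite {1}(divn_eq s n.+1) exprD mulnC exprM Bn.
  have -> : forall k, (c%:M : 'M[R[i]]_n.+1) ^+ k = (c ^+ k)%:M.
    by elim=> [|k IH]; rewrite ?expr0 // !exprS IH -mulmxE -scalar_mxM.
  by rewrite -mulmxE mulmxA mul_mx_scalar scalemxAl.
have rkS : \rank (sample_obs_mx A C S) =
    \rank (\matrix_(i < size S, j < n.+1) (D *m B ^+ nth 0%N S i) 0 j).
  rewrite -(mxrank_map f); congr (\rank _); apply/matrixP => i j.
  rewrite [LHS]mxE [in LHS]mxE [RHS]mxE -vE /cmx [RHS]mxE //.
have rkO : \rank (\matrix_(i < n.+1, j < n.+1) (D *m B ^+ i) 0 j) = n.+1.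
  rewrite -[RHS]obs -(mxrank_map f); congr (\rank _); apply/matrixP => i j.
  rewrite [RHS]mxE [in RHS]mxE [LHS]mxE -vE /cmx [LHS]mxE //.
rewrite rkS (@rank_key _ n (fun s => D *m B ^+ s) c S c0 vmod rkO).
exact: comb_equiv.
Qed.
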